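(* Let $\mathbf{s}_1,\dots,\mathbf{s}_l\in\mathbb{Q}^n$, let $\mathcal P$ be the convex hull of $\bigcup_{i=1}^l(\mathbf{s}_i+\mathbb{R}_{\le0}^n)$, $P=\mathcal P\cap\mathbb{Q}^n$, and fix a monomial order $\le_m$. For every $f\in K\{\mathbf{X};P\}$, the set $$\mathrm{Terms}_P(\langle f\rangle)=\{\mathrm{LT}_{\mathbf{r}}(\langle f\rangle):\mathbf{r}\in P\}$$ is finite, where $\langle f\rangle=f\,K\{\mathbf{X};P\}$.
   Context: $K$ is a field complete for a discrete valuation $\mathrm{val}$. For $\mathbf{r}\in\mathbb{Q}^n$, $\mathrm{val}_{\mathbf{r}}(a\mathbf{X}^\alpha)=\mathrm{val}(a)-\mathbf{r}\cdot\alpha$. $K\{\mathbf{X};P\}$ is the set of power series $\sum_{\alpha\in\mathbb{N}^n}a_\alpha\mathbf{X}^\alpha$ such that for every $\mathbf{r}\in P$, $\mathrm{val}_{\mathbf{r}}(a_\alpha\mathbf{X}^\alpha)\to+\infty$ as $|\alpha|\to\infty$. For $\mathbf{r}\in P$ and a nonzero $g\in K\{\mathbf{X};P\}$, $\mathrm{LT}_{\mathbf{r}}(g)$ is the largest term of $g$ for the order $a\mathbf{X}^\alpha<b\mathbf{X}^\beta$ iff $\mathrm{val}_{\mathbf{r}}(a\mathbf{X}^\alpha)>\mathrm{val}_{\mathbf{r}}(b\mathbf{X}^\beta)$, or equal and $\mathbf{X}^\alpha<_m\mathbf{X}^\beta$. For an ideal $J$ of $K\{\mathbf{X};P\}$,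 $\mathrm{LT}_{\mathbf{r}}(J)$ is the ideal of $K[\mathbf{X}]$ generated by $\{\mathrm{LT}_{\mathbf{r}}(g): g\in J\setminus\{0\}\}$. *)

(* Defs.v *)
From HB Require Import structures.
From mathcomp Require Import all_boot all_order all_algebra.
From mathcomp Require Import mpoly.

Set Implicit Arguments.
Unset Strict Implicit.
Unset Printing Implicit Defensive.

Import Order.TTheory GRing.Theory Num.Theory.
Local Open Scope ring_scope.

Section Defs.
Variable K : fieldType.

(* A (normalized) discrete valuation on K, given by its values on nonzero
   elements (val 0 = +oo is encoded by guarding every use with "<> 0"). *)
Definition discrete_valuation (v : K -> int) : Prop :=
  (forall x y, x != 0 -> y != 0 -> v (x * y) = v x + v y) /\
  (forall x y, x != 0 -> y != 0 -> x + y != 0 ->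
      Num.min (v x) (v y) <= v (x + y)) /\
  (exists pi : K, pi != 0 /\ v pi = 1).

Definition v_complete (v : K -> int) : Prop :=
  forall u : nat -> K,
    (forall M : int, exists N : nat, forall i j, (N <= i)%N -> (N <= j)%N ->
        u i = u j \/ M <= v (u i - u j)) ->
    exists l : K, forall M : int, exists N : nat, forall i, (N <= i)%N ->
        u i = l \/ M <= v (u i - l).

Variable n : nat.

Definition pseries := 'X_{1..n} -> K.

(* val_r (a X^al) = val a - r . al   (meaningful for a <> 0) *)
Definition valr (v : K -> int) (r : 'I_n -> rat) (a : K) (al : 'X_{1..n}) : rat :=
  (v a)%:~R - \sum_(i < n) r i * (al i)%:R.

Definition in_KXP (v : K -> int) (P : ('I_n -> rat) -> Prop) (g : pseries) : Prop :=
  forall r, P r -> forall M : rat, exists N : nat, forall al : 'X_{1..n},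
    (N <= mdeg al)%N -> g al = 0 \/ M <= valr v r (g al) al.

Definition ps_mul (f g : pseries) : pseries :=
  fun al => \sum_(b : 'X_{1..n < (mdeg al).+1} | (bmnm b <= al)%MM)
              f b * g (al - bmnm b)%MM.

Definition principal_ideal (v : K -> int) (P : ('I_n -> rat) -> Prop)
    (f g : pseries) : Prop :=
  exists h : pseries, in_KXP v P h /\ forall al, g al = ps_mul f h al.

Definition monomial_order (le : rel 'X_{1..n}) : Prop :=
  (forall a, le a a) /\
  (forall a b, le a b -> le b a -> a = b) /\
  (forall a b c, le a b -> le b c -> le a c) /\
  (forall a b, le a b \/ le b a) /\
  (forall a b c, le a b -> le (a + c)%MM (b + c)%MM) /\
  well_founded (fun a b => le a b /\ a != b).

Definition is_LT (v : K -> int) (le : rel 'X_{1..n}) (r : 'I_n -> rat)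
    (g : pseries) (a : K) (al : 'X_{1..n}) : Prop :=
  a = g al /\ a != 0 /\
  forall be, g be != 0 ->
    valr v r a al < valr v r (g be) be \/
    (valr v r (g be) be = valr v r a al /\ le be al).

Definition LT_ideal (v : K -> int) (le : rel 'X_{1..n}) (r : 'I_n -> rat)
    (J : pseries -> Prop) (p : {mpoly K[n]}) : Prop :=
  exists (m : nat) (c t : 'I_m -> {mpoly K[n]}),
    (forall i, exists (g : pseries) (a : K) (al : 'X_{1..n}),
        J g /\ is_LT v le r g a al /\ t i = a *: 'X_[al]) /\
    p = \sum_(i < m) c i * t i.

End Defs.

(* r in P = (convex hull of U_i (s_i + R_{<=0}^n)) /\ Q^n,
   with the convex hull taken via rational convex combinations. *)
Definition in_P (n l : nat) (s : 'I_l -> 'I_n -> rat) (r : 'I_n -> rat) : Prop :=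
  exists (m : nat) (lam : 'I_m -> rat) (p : 'I_m -> 'I_n -> rat),
    (forall k, 0 <= lam k) /\ \sum_(k < m) lam k = 1 /\
    (forall k, exists i : 'I_l, forall j, p k j <= s i j) /\
    (forall j, r j = \sum_(k < m) lam k * p k j).

(* Main.v *)
Require Import Defs.
From HB Require Import structures.
From mathcomp Require Import all_boot all_order all_algebra.
From mathcomp Require Import mpoly.
From Stdlib Require Import ClassicalEpsilon.
From mathcomp Require Import lra.
Set Implicit Arguments.
Unset Strict Implicit.
Unset Printing Implicit Defensive.
Import Order.TTheory GRing.Theory Num.Theory.
Local Open Scope ring_scope.
Lemma list_max (T : eqType) (R : T -> T -> Prop) (x0 : T) (s : seq T) :
  (forall x y, R x y \/ R y x) -> (forall x y z, R x y -> R y z -> R x z) ->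
  x0 \in s -> exists m, m \in s /\ forall x, x \in s -> R x m.
Proof.
move=> tot tr; elim: s x0 => [//|y s IH] x0 _.
case: s IH => [|z s] IH.
  exists y; split; first by rewrite inE.
  by move=> x; rewrite inE => /eqP ->; case: (tot y y).
have [m [ms hm]] := IH z (mem_head _ _).
case: (tot m y) => hmy.
- exists y; split; first exact: mem_head.
  move=> x; rewrite inE => /orP[/eqP ->|xs]; first by case: (tot y y).
  exact: tr (hm x xs) hmy.
- exists m; split; first by rewrite inE ms orbT.
  by move=> x; rewrite inE => /orP[/eqP ->|xs]; [exact: hmy| exact: hm].
Qed.

Lemma nat_min_exists (Q : nat -> Prop) x : Q x -> exists y, Q y /\ forall z, Q z -> (y <= z)%N.
Proof.
elim/ltn_ind: x => x IH Qx.
case: (classic (exists z, Q z /\ (z < x)%N)) => [[z [Qz zx]]|H].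
  exact: IH Qz.
exists x; split => // z Qz; rewrite leqNgt; apply/negP => zx; apply: H; by exists z.
Qed.

Lemma nat_subseq (w : nat -> nat) : exists psi : nat -> nat,
  (forall a b, (a < b)%N -> (psi a < psi b)%N) /\
  (forall a b, (a <= b)%N -> (w (psi a) <= w (psi b))%N).
Proof.
have H m : exists j, (m < j)%N /\ forall j', (m < j')%N -> (w j <= w j')%N.
  have Q0 : exists j, (m < j)%N /\ w j = w m.+1 by exists m.+1.
  have [y [[j [mj wj]] hy]] := nat_min_exists (Q := fun x => exists j, (m < j)%N /\ w j = x) Q0.
  exists j; split => // j' mj'; rewrite wj; apply: hy; by exists j'.
pose g m := proj1_sig (constructive_indefinite_description _ (H m)).
have gP m : (m < g m)%N /\ forall j', (m < j')%N -> (w (g m) <= w j')%N.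
  exact: proj2_sig (constructive_indefinite_description _ (H m)).
pose psi k := iter k.+1 g 0%N.
have step k : (psi k < psi k.+1)%N /\ (w (psi k) <= w (psi k.+1))%N.
  rewrite /psi [iter k.+2 g 0%N]iterS; split; first by case: (gP (iter k.+1 g 0%N)).
  have [h1 h2] := gP (iter k g 0%N); have [h3 _] := gP (iter k.+1 g 0%N).
  exact: h2 (ltn_trans h1 h3).
exists psi; split.
  move=> a b; elim: b => // b IHb; rewrite ltnS leq_eqVlt => /orP[/eqP->|ab].
    exact: (step b).1.
  exact: ltn_trans (IHb ab) (step b).1.
move=> a b; elim: b => [|b IHb]; first by rewrite leqn0 => /eqP->.
rewrite leq_eqVlt => /orP[/eqP->//|]; rewrite ltnS => ab.
exact: leq_trans (IHb ab) (step b).2.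
Qed.

Lemma dickson n (u : nat -> 'X_{1..n}) : exists phi : nat -> nat,
  (forall a b, (a < b)%N -> (phi a < phi b)%N) /\
  (forall a b, (a <= b)%N -> (u (phi a) <= u (phi b))%MM).
Proof.
suff: forall cs : seq 'I_n, exists phi : nat -> nat,
  (forall a b, (a < b)%N -> (phi a < phi b)%N) /\
  (forall j, j \in cs -> forall a b, (a <= b)%N -> (u (phi a) j <= u (phi b) j)%N).
  move=> /(_ (enum 'I_n)) [phi [h1 h2]]; exists phi; split => // a b ab.
  by apply/mnm_lepP => j; apply: h2 => //; rewrite mem_enum.
elim => [|c cs [phi [h1 h2]]].
  by exists id; split.
have [psi [p1 p2]] := nat_subseq (fun k => u (phi k) c).
have mono a b : (a <= b)%N -> (psi a <= psi b)%N.
  by rewrite leq_eqVlt => /orP[/eqP->//|/p1/ltnW].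
exists (fun k => phi (psi k)); split; first by move=> a b /p1/h1.
move=> j; rewrite inE => /orP[/eqP->|jc] a b ab; first exact: p2.
by apply: h2 => //; apply: mono.
Qed.
Section Val.
Variables (K : fieldType) (v : K -> int).
Hypothesis dv : discrete_valuation v.

Lemma vM x y : x != 0 -> y != 0 -> v (x * y) = v x + v y.
Proof. by case: dv => h _; apply: h. Qed.

Lemma vU x y : x != 0 -> y != 0 -> x + y != 0 -> Num.min (v x) (v y) <= v (x + y).
Proof. by case: dv => _ [h _]; apply: h. Qed.

Lemma v1 : v 1 = 0.
Proof.
have := vM (oner_neq0 K) (oner_neq0 K); rewrite mulr1 => h.
by move: h; rewrite -{1}(addr0 (v 1)) => /addrI <-.
Qed.

Lemma vN x : x != 0 -> v (- x) = v x.
Proof.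
move=> x0.
have m1 : (-1 : K) != 0 by rewrite oppr_eq0 oner_neq0.
have h : v (-1) = 0.
  have := vM m1 m1; rewrite mulrNN mulr1 v1 => /eqP; rewrite eq_sym -mulr2n.
  by rewrite -mulr_natr mulf_eq0 pnatr_eq0 orbF => /eqP.
by rewrite -mulN1r vM // h add0r.
Qed.

Lemma vsum (I : eqType) (r : seq I) (P : pred I) (F : I -> K) :
  \sum_(i <- r | P i) F i != 0 ->
  exists i, [/\ i \in r, P i, F i != 0 & v (F i) <= v (\sum_(i <- r | P i) F i)].
Proof.
elim: r => [|x r IH]; first by rewrite big_nil eqxx.
rewrite big_cons; case: ifP => Px; last first.
  by move=> /IH [i [ir Pi Fi vi]]; exists i; split => //; rewrite inE ir orbT.
set S := \sum_(i <- r | P i) F i => hs.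
have [S0|S0] := eqVneq S 0.
  exists x; split => //; first exact: mem_head.
    by move: hs; rewrite S0 addr0.
  by rewrite S0 addr0.
have [F0|F0] := eqVneq (F x) 0.
  move: hs; rewrite F0 add0r => /IH [i [ir Pi Fi vi]]; exists i; split => //.
  by rewrite inE ir orbT.
have := vU F0 S0 hs; rewrite ge_min => /orP[h|h].
  by exists x; split => //; exact: mem_head.
have [i [ir Pi Fi vi]] := IH S0; exists i; split => //; first by rewrite inE ir orbT.
exact: le_trans vi h.
Qed.

Lemma vdom x y : x != 0 -> (y = 0 \/ (y != 0 /\ v x < v y)) ->
  x + y != 0 /\ v (x + y) = v x.
Proof.
move=> x0 [->|[y0 lt]]; first by rewrite addr0.
have xy0 : x + y != 0.
  apply/negP => /eqP h; move: lt; rewrite (_ : y = - x); last by apply/eqP; rewrite -subr_eq0 opprK addrC h.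
  by rewrite vN // ltxx.
split => //.
have h1 := vU x0 y0 xy0.
have e : x = (x + y) + (- y) by rewrite addrK.
have ny0 : - y != 0 by rewrite oppr_eq0.
have h2 := vU xy0 ny0 (ltac:(by rewrite -e)).
rewrite -e vN // in h2.
have a2 : v (x + y) <= v x.
  by move: h2; rewrite ge_min (leNgt (v y)) lt orbF.
have a1 : v x <= v (x + y).
  move: h1; rewrite ge_min => /orP[//|h]; exact: ltW (lt_le_trans lt h).
by apply/eqP; rewrite eq_le a1 a2.
Qed.

End Val.
Section LT.
Variables (K : fieldType) (v : K -> int) (n : nat) (le : rel 'X_{1..n}).
Hypothesis dv : discrete_valuation v.
Hypothesis mo : monomial_order le.

Definition dot (r : 'I_n -> rat) (al : 'X_{1..n}) : rat := \sum_(i < n) r i * (al i)%:R.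

Lemma valrE (r : 'I_n -> rat) (a : K) (al : 'X_{1..n}) : valr v r a al = (v a)%:~R - dot r al.
Proof. by []. Qed.

Lemma dotD (r : 'I_n -> rat) (a b : 'X_{1..n}) : dot r (a + b)%MM = dot r a + dot r b.
Proof. by rewrite /dot -big_split; apply: eq_bigr => i _; rewrite mnmDE natrD mulrDr. Qed.

Lemma valrM (r : 'I_n -> rat) (x y : K) (a b : 'X_{1..n}) : x != 0 -> y != 0 ->
  valr v r (x * y) (a + b)%MM = valr v r x a + valr v r y b.
Proof.
move=> x0 y0; rewrite !valrE dotD (vM dv x0 y0) intrD; lra.
Qed.

Lemma le_refl' a : le a a. Proof. by case: mo. Qed.
Lemma le_anti a b : le a b -> le b a -> a = b. Proof. by case: mo => _ [h _]; apply: h. Qed.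
Lemma le_tr a b c : le a b -> le b c -> le a c. Proof. by case: mo => _ [_ [h _]]; apply: h. Qed.
Lemma le_tot a b : le a b \/ le b a. Proof. by case: mo => _ [_ [_ [h _]]]; apply: h. Qed.
Lemma le_addr a b c : le a b -> le (a + c)%MM (b + c)%MM.
Proof. by case: mo => _ [_ [_ [_ [h _]]]]; apply: h. Qed.
Lemma le_addl a b c : le a b -> le (c + a)%MM (c + b)%MM.
Proof. by rewrite ![(c + _)%MM]addmC; apply: le_addr. Qed.

Lemma le_add2 a b c d : le a b -> le c d -> le (a + c)%MM (b + d)%MM.
Proof. by move=> h1 h2; apply: le_tr (le_addr c h1) (le_addl b h2). Qed.

Lemma LT_uniq r g a1 al1 a2 al2 : is_LT v le r g a1 al1 -> is_LT v le r g a2 al2 -> al1 = al2.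
Proof.
move=> [e1 [n1 h1]] [e2 [n2 h2]].
have := h1 al2; rewrite -e2 => /(_ n2) [c1|[c1 l1]];
have := h2 al1; rewrite -e1 => /(_ n1) [c2|[c2 l2]].
- by move: (lt_trans c1 c2); rewrite ltxx.
- by move: c1; rewrite c2 ltxx.
- by move: c2; rewrite c1 ltxx.
- exact: le_anti.
Qed.

Lemma LT_exists (P : ('I_n -> rat) -> Prop) r g al0 :
  in_KXP v P g -> P r -> g al0 != 0 -> exists a al, is_LT v le r g a al.
Proof.
move=> hg Pr g0.
have [N hN] := hg r Pr (valr v r (g al0) al0 + 1).
pose lst := [seq al <- map (@bmnm n N) (enum {: 'X_{1..n < N}}) | g al != 0].
pose R x y := valr v r (g y) y < valr v r (g x) x \/
   (valr v r (g x) x = valr v r (g y) y /\ le x y).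
have small al : g al != 0 -> (mdeg al < N)%N \/ valr v r (g al0) al0 < valr v r (g al) al.
  move=> ga; case: (ltnP (mdeg al) N) => [|hal]; [by left|right].
  case: (hN al hal) => [h|h]; first by rewrite h eqxx in ga.
  exact: lt_le_trans (ltr_pwDr ltr01 (lexx _)) h.
have inl al : g al != 0 -> (mdeg al < N)%N -> al \in lst.
  move=> ga hal; rewrite mem_filter ga /=.
  apply/mapP; exists (BMultinom hal) => //; exact: mem_enum.
have al0l : al0 \in lst.
  apply: inl => //; case: (small al0 g0) => // h; by rewrite ltxx in h.
have Rtot x y : R x y \/ R y x.
  rewrite /R; case: (ltgtP (valr v r (g x) x) (valr v r (g y) y)) => h.
  + by right; left.
  + by left; left.
  + by case: (le_tot x y) => h'; [left|right]; right.
have Rtr x y z : R x y -> R y z -> R x z.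
  rewrite /R => [[c1|[c1 l1]] [c2|[c2 l2]]].
  + by left; apply: lt_trans c2 c1.
  + by left; rewrite -c2.
  + by left; rewrite c1.
  + by right; split; [rewrite c1 | apply: le_tr l1 l2].
have [m [ml hm]] := list_max Rtot Rtr al0l.
exists (g m), m; split => //; split; first by move: ml; rewrite mem_filter => /andP[].
move=> be gbe; case: (ltnP (mdeg be) N) => hbe.
  by case: (hm be (inl be gbe hbe)) => [h|[h1 h2]]; [left|right].
left; case: (small be gbe) => [h|h]; first by rewrite ltnNge hbe in h.
case: (hm al0 al0l) => [h'|[h' _]]; first exact: lt_trans h' h.
by rewrite -h'.
Qed.

End LT.
Lemma sum_ge (A B x y : rat) : (A < x \/ x = A) -> (B < y \/ y = B) ->
  A + B <= x + y /\ (x + y = A + B -> x = A /\ y = B).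
Proof.
move=> h1 h2; split.
  by case: h1 => h1; case: h2 => h2; lra.
move=> E; split; apply/eqP; rewrite eq_le; apply/andP; split;
  by case: h1 => h1; case: h2 => h2; lra.
Qed.

Section Prod.
Variables (K : fieldType) (v : K -> int) (n : nat) (le : rel 'X_{1..n}).
Hypothesis dv : discrete_valuation v.
Hypothesis mo : monomial_order le.

Lemma LT_prod (P : ('I_n -> rat) -> Prop) r (f h : pseries K n) a al b be :
  in_KXP v P h -> P r -> is_LT v le r f a al -> is_LT v le r (ps_mul f h) b be ->
  (al <= be)%MM.
Proof.
move=> hh Pr Lf Lg.
have [hz|[g0 hg0]] : (forall x, h x = 0) \/ exists x, h x != 0.
  case: (classic (exists x, h x != 0)) => [H|H]; [by right|left].
  move=> x; apply/eqP; apply/negPn/negP => hx; apply: H; by exists x.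
  case: Lg => eb [b0 _]; move: b0; rewrite eb /ps_mul big1 ?eqxx //.
  by move=> i _; rewrite hz mulr0.
have [c [ga Lh]] := LT_exists mo hh Pr hg0.
move: (Lf) (Lh) => [ea [a0 hfa]] [ec [c0 hhc]].
set V : rat := valr v r a al + valr v r c ga.
have term (d b' : 'X_{1..n}) : (b' <= d)%MM -> f b' != 0 -> h (d - b')%MM != 0 ->
  V <= valr v r (f b' * h (d - b')%MM) d /\
  (valr v r (f b' * h (d - b')%MM) d = V -> le b' al /\ le (d - b')%MM ga).
  move=> hb fb0 hb0.
  have ed : d = (b' + (d - b'))%MM by rewrite addmC submK.
  have := valrM dv r b' (d - b')%MM fb0 hb0; rewrite -ed => ->.
  rewrite /V.
  have H1 := hfa b' fb0; have H2 := hhc _ hb0.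
  have H1' : valr v r a al < valr v r (f b') b' \/ valr v r (f b') b' = valr v r a al.
    by case: H1 => [?|[? _]]; [left|right].
  have H2' : valr v r c ga < valr v r (h (d - b')%MM) (d - b')%MM \/
     valr v r (h (d - b')%MM) (d - b')%MM = valr v r c ga.
    by case: H2 => [?|[? _]]; [left|right].
  have [S1 S2] := sum_ge H1' H2'.
  split => // /S2 [E1 E2]; split.
    by case: H1 => [h1|[_ //]]; move: h1; rewrite E1 ltxx.
  by case: H2 => [h1|[_ //]]; move: h1; rewrite E2 ltxx.
have ledd (d b' : 'X_{1..n}) : (b' <= d)%MM -> le b' al -> le (d - b')%MM ga -> le d (al + ga)%MM.
  move=> hb l1 l2; have ed : d = (b' + (d - b'))%MM by rewrite addmC submK.
  by rewrite {1}ed; apply: (le_add2 mo l1 l2).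
have claim1 d : ps_mul f h d != 0 ->
   V <= valr v r (ps_mul f h d) d /\ (valr v r (ps_mul f h d) d = V -> le d (al + ga)%MM).
  move=> hne; have [b' [_ hb ft vle]] := vsum dv hne.
  move: ft; rewrite mulf_eq0 negb_or => /andP[fb0 hb0].
  have [t1 t2] := term d b' hb fb0 hb0.
  have vl : valr v r (f b' * h (d - b')%MM) d <= valr v r (ps_mul f h d) d.
    by rewrite !valrE lerD2r ler_int.
  split; first exact: le_trans t1 vl.
  move=> E; have [l1 l2] : le b' al /\ le (d - b')%MM ga.
    apply: t2; apply/eqP; rewrite eq_le t1 andbT -E; exact: vl.
  exact: ledd hb l1 l2.
set d0 := (al + ga)%MM.
have claim2 : ps_mul f h d0 != 0 /\ valr v r (ps_mul f h d0) d0 = V.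
  have hi : (mdeg al < (mdeg d0).+1)%N by rewrite mdegD ltnS leq_addr.
  have eg : (d0 - al)%MM = ga by rewrite /d0 addmC addmK.
  have vx : valr v r (a * c) d0 = V by rewrite /d0 (valrM dv).
  rewrite /ps_mul (bigD1 (BMultinom hi)) /=; last exact: lem_addr.
  rewrite eg -ea -ec.
  set rest := (X in _ + X).
  have ac0 : a * c != 0 by rewrite mulf_neq0.
  have [E1 E2] : a * c + rest != 0 /\ v (a * c + rest) = v (a * c).
    apply: vdom => //.
    case: (eqVneq rest 0) => [->|rn]; [by left|right; split => //].
    have [b' [_ /andP[hb bne] ft vle]] := vsum dv rn.
    move: (ft); rewrite mulf_eq0 negb_or => /andP[fb0 hb0].
    have [t1 t2] := term d0 b' hb fb0 hb0.
    suff: v (a * c) < v (f b' * h (d0 - b')%MM) by move=> h'; exact: lt_le_trans h' vle.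
    have : valr v r (a * c) d0 < valr v r (f b' * h (d0 - b')%MM) d0.
      rewrite vx lt_neqAle t1 andbT; apply/negP => /eqP E.
      have [l1 l2] := t2 (esym E).
      have ed : d0 = (b' + (d0 - b'))%MM by rewrite addmC submK.
      have e1 := le_addr mo (d0 - b')%MM l1.
      have e2 := le_addl mo al l2.
      have e3 : le (al + (d0 - b'))%MM (b' + (d0 - b'))%MM by rewrite -ed; exact: e2.
      have e4 := le_anti mo e3 e1.
      have e5 := @addIm n (d0 - b')%MM _ _ e4.
      move: bne; rewrite -(inj_eq val_inj) /= -e5.
      by rewrite eqxx.
    by rewrite !valrE ltrD2r ltr_int.
  split => //; by rewrite valrE E2 -valrE.
case: Lg => eb [b0 hgb].
have [c1 c2] := claim1 be (ltac:(by rewrite -eb)).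
have [n2 v2] := claim2.
case: (hgb d0 n2) => [h'|[h' l']].
  by move: h' c1; rewrite v2 -eb => h' c1; move: (lt_le_trans h' c1); rewrite ltxx.
have := c2 (ltac:(by rewrite -eb -h' v2)) => l2.
have -> : be = d0 by exact: (le_anti mo l2 l').
exact: lem_addr.
Qed.

End Prod.
From Stdlib Require Import FunctionalExtensionality.

Section Ideal.
Variables (K : fieldType) (v : K -> int) (n : nat) (le : rel 'X_{1..n}).
Hypothesis dv : discrete_valuation v.
Hypothesis mo : monomial_order le.

Definition delta : pseries K n := fun x => if x == 0%MM then 1 else 0.

Lemma delta_KXP P : in_KXP v P delta.
Proof.
move=> r _ M; exists 1%N => al hal; left; rewrite /delta.
case: eqP => // e; by move: hal; rewrite e mdeg0.
Qed.

Lemma ps_mul_delta (f : pseries K n) x : ps_mul f delta x = f x.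
Proof.
have hx : (mdeg x < (mdeg x).+1)%N by [].
rewrite /ps_mul (bigD1 (BMultinom hx)) /=; last exact: lepm_refl.
have -> : (x - x = 0)%MM by apply/mnmP => i; rewrite mnmBE mnm0E subnn.
rewrite /delta eqxx mulr1 big1 ?addr0 // => b /andP[hb bne].
case: eqP => [e|]; last by rewrite mulr0.
move: bne; rewrite -(inj_eq val_inj) /=.
have := submK hb; rewrite e add0m => ->; by rewrite eqxx.
Qed.

Lemma ideal_char (P : ('I_n -> rat) -> Prop) r (f : pseries K n) a al :
  in_KXP v P f -> P r -> is_LT v le r f a al ->
  forall p, LT_ideal v le r (principal_ideal v P f) p <-> exists q, p = q * 'X_[al].
Proof.
move=> hf Pr Lf p; split.
  move=> [m [c [t [ht ->]]]].
  have hq : forall i : 'I_m, exists q, c i * t i = q * 'X_[al].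
    move=> i; have [g [a' [al' [[h [hh eg]] [Lg ->]]]]] := ht i.
    have eg' : g = ps_mul f h by apply: functional_extensionality.
    rewrite eg' in Lg.
    have le1 := LT_prod dv mo hh Pr Lf Lg.
    exists (c i * (a' *: 'X_[al' - al])).
    by rewrite -mulrA -scalerAl -mpolyXD submK.
  pose Q i := proj1_sig (constructive_indefinite_description _ (hq i)).
  exists (\sum_(i < m) Q i); rewrite mulr_suml; apply: eq_bigr => i _.
  exact: proj2_sig (constructive_indefinite_description _ (hq i)).
move=> [q ->]; have [ea [a0 _]] := Lf.
exists 1%N, (fun _ => q * (a^-1)%:MP), (fun _ => a *: 'X_[al]); split.
  move=> i; exists f, a, al; split; last by [].
  exists delta; split; first exact: delta_KXP.
  by move=> x; rewrite ps_mul_delta.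
by rewrite big_ord1 -mulrA mul_mpolyC scalerA mulVf // scale1r.
Qed.

End Ideal.
Lemma in_P_s n l (s : 'I_l -> 'I_n -> rat) t : in_P s (s t).
Proof.
exists 1%N, (fun _ => 1), (fun _ => s t); split; first by move=> _; exact: ler01.
split; first by rewrite big_ord1.
split; first by move=> _; exists t => j; exact: lexx.
by move=> j; rewrite big_ord1 mul1r.
Qed.

Lemma dot_le n l (s : 'I_l -> 'I_n -> rat) r (d : 'X_{1..n}) :
  in_P s r -> exists t, dot r d <= dot (s t) d.
Proof.
move=> [m [lam [p [l0 [ls [hp hr]]]]]].
pose ik k := proj1_sig (constructive_indefinite_description _ (hp k)).
have ikP k j : p k j <= s (ik k) j := proj2_sig (constructive_indefinite_description _ (hp k)) j.
case: m lam p l0 ls hp hr ik ikP => [|m] lam p l0 ls hp hr ik ikP.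
  by move: ls; rewrite big_ord0 => /eqP; rewrite eq_sym oner_eq0.
pose R x y := dot (s x) d <= dot (s y) d.
have Rtot x y : R x y \/ R y x.
  by rewrite /R; case: (lerP (dot (s x) d) (dot (s y) d)) => h; [left|right; apply: ltW].
have Rtr x y z : R x y -> R y z -> R x z by rewrite /R; apply: le_trans.
have [t [_ ht]] := list_max Rtot Rtr (mem_enum 'I_l (ik ord0)).
exists t.
have e : dot r d = \sum_(k < m.+1) lam k * dot (p k) d.
  rewrite /dot; under eq_bigr => j _ do rewrite hr mulr_suml.
  rewrite exchange_big /=; apply: eq_bigr => k _; rewrite mulr_sumr.
  by apply: eq_bigr => j _; rewrite mulrA.
rewrite e; apply: (@le_trans _ _ (\sum_(k < m.+1) lam k * dot (s t) d)).
  apply: ler_sum => k _; apply: ler_wpM2l => //.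
  apply: le_trans (ht (ik k) (mem_enum _ _)).
  rewrite /dot; apply: ler_sum => j _; apply: ler_wpM2r => //.
by rewrite -mulr_suml ls mul1r.
Qed.

Lemma num2 (Vk V0 dr r0 ds s0 : rat) :
  Vk - (dr + r0) <= V0 - r0 -> dr <= ds -> V0 - s0 + 1 <= Vk - (ds + s0) -> False.
Proof. move=> h1 h2 h3; lra. Qed.

Lemma phi_ge (phi : nat -> nat) : (forall a b, (a < b)%N -> (phi a < phi b)%N) -> forall k, (k <= phi k)%N.
Proof.
move=> h; elim => // k IH; exact: leq_ltn_trans IH (h _ _ (ltnSn k)).
Qed.

Section Bound.
Variables (K : fieldType) (v : K -> int) (n l : nat) (le : rel 'X_{1..n}).
Variable s : 'I_l -> 'I_n -> rat.
Hypothesis dv : discrete_valuation v.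

Lemma LT_bound (f : pseries K n) : in_KXP v (in_P s) f ->
  exists D, forall r, in_P s r -> forall a al, is_LT v le r f a al -> (mdeg al < D)%N.
Proof.
move=> hf; case: (classic (exists D, forall r, in_P s r -> forall a al, is_LT v le r f a al -> (mdeg al < D)%N)) => // H.
have H' : forall D, exists x : ('I_n -> rat) * K * 'X_{1..n},
    in_P s x.1.1 /\ is_LT v le x.1.1 f x.1.2 x.2 /\ (D <= mdeg x.2)%N.
  move=> D; case: (classic (exists x : ('I_n -> rat) * K * 'X_{1..n},
    in_P s x.1.1 /\ is_LT v le x.1.1 f x.1.2 x.2 /\ (D <= mdeg x.2)%N)) => // H2.
  exfalso; apply: H; exists D => r Pr a al L; rewrite ltnNge; apply/negP => hD.
  by apply: H2; exists (r, a, al).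
pose u k := proj1_sig (constructive_indefinite_description _ (H' k)).
have uP k : in_P s (u k).1.1 /\ is_LT v le (u k).1.1 f (u k).1.2 (u k).2 /\ (k <= mdeg (u k).2)%N.
  exact: proj2_sig (constructive_indefinite_description _ (H' k)).
have [phi [phi1 phi2]] := dickson (fun k => (u k).2).
set al0 := (u (phi 0%N)).2.
have f0 : f al0 != 0.
  have [_ [[e [a0 _]] _]] := uP (phi 0%N); by rewrite -e.
have hN t : exists N : nat, forall al : 'X_{1..n}, (N <= mdeg al)%N ->
    f al = 0 \/ valr v (s t) (f al0) al0 + 1 <= valr v (s t) (f al) al.
  exact: hf (s t) (in_P_s s t) _.
pose Nf t := proj1_sig (constructive_indefinite_description _ (hN t)).
have NfP t := proj2_sig (constructive_indefinite_description _ (hN t)).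
pose D := \big[maxn/0%N]_(t < l) Nf t.
pose k := phi D.
have [Pr [[ek [ak0 hk]] hdeg]] := uP k.
set r := (u k).1.1 in Pr ek ak0 hk.
set alk := (u k).2 in ek ak0 hk hdeg.
have le0k : (al0 <= alk)%MM by apply: phi2.
have [t ht] := dot_le (alk - al0)%MM Pr.
have fk : f alk != 0 by rewrite -ek.
have h1 : valr v r (f alk) alk <= valr v r (f al0) al0.
  rewrite -ek; case: (hk al0 f0) => [h|[h _]]; [exact: ltW | by rewrite h].
have hD : (Nf t <= mdeg alk)%N.
  have h0 : (Nf t <= D)%N by rewrite /D; exact: leq_bigmax.
  apply: leq_trans h0 _; apply: leq_trans hdeg; exact: phi_ge.
case: (NfP t alk hD) => [h|h]; first by rewrite h eqxx in fk.
have ea : alk = ((alk - al0) + al0)%MM by rewrite submK.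
move: h1 h; rewrite !valrE {2 4}ea !dotD => h1 h3.
exfalso; exact: num2 h1 ht h3.
Qed.

End Bound.
Theorem mainTheorem13 (K : fieldType) (v : K -> int) (n l : nat)
    (s : 'I_l -> 'I_n -> rat) (le : rel 'X_{1..n}) (f : pseries K n) :
  discrete_valuation v -> v_complete v -> monomial_order le ->
  in_KXP v (in_P s) f ->
  exists (N : nat) (F : nat -> {mpoly K[n]} -> Prop),
    forall r : 'I_n -> rat, in_P s r ->
      exists i : nat, (i < N)%N /\
        forall p : {mpoly K[n]},
          LT_ideal v le r (principal_ideal v (in_P s) f) p <-> F i p.
Proof.
move=> dv _ mo hf.
case: (classic (exists x, f x != 0)) => [[x0 fx0]|Hz]; last first.
  have fz x : f x = 0.
    apply/eqP; apply/negPn/negP => hx; apply: Hz; by exists x.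
  exists 1%N, (fun _ p => p = 0) => r Pr; exists 0%N; split => // p; split.
    move=> [m [c [t [ht ->]]]]; apply: big1 => i _; exfalso.
    have [g [a' [al' [[h [hh eg]] [[ea [a0 _]] _]]]]] := ht i.
    move: a0; rewrite ea eg /ps_mul big1 ?eqxx // => b _; by rewrite fz mul0r.
  move=> ->; exists 0%N, (fun _ => 0), (fun _ => 0); split; first by case.
  by rewrite big_ord0.
have [D hD] := LT_bound le hf.
pose L := [seq bmnm x | x <- enum {: 'X_{1..n < D}}].
exists (size L), (fun i p => exists q, p = q * 'X_[nth 0%MM L i]) => r Pr.
have [a [al Lf]] := LT_exists mo hf Pr fx0.
have alL : al \in L.
  apply/mapP; exists (BMultinom (hD r Pr a al Lf)) => //; exact: mem_enum.
exists (index al L); split; first by rewrite index_mem.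
rewrite nth_index //; move=> p; exact: (ideal_char dv mo hf Pr Lf p).
Qed.
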